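(* For $w\in\mathfrak S_n$, the following are equivalent: (1) $X^\circ_w\cap\mathrm{Pet}_n\neq\emptyset$; (2) $\Omega^\circ_w\cap\mathrm{Pet}_n\ne\emptyset$; (3) the permutation flag $w$ lies in $\mathrm{Pet}_n$, i.e. $w=w_J$ for some $J\subseteq[n-1]$.
   Context: $Fl_n=GL_n(\mathbb C)/B$ is the full flag variety of $\mathbb C^n$ ($B$ upper triangular), and a permutation $w$ is identified with the flag $V_i=\langle e_{w(1)},\dots,e_{w(i)}\rangle$. $X^\circ_w=BwB/B$ is the Schubert cell and $\Omega^\circ_w=B^-wB/B$ the dual Schubert cell ($B^-$ lower triangular). $N$ is the $n\times n$ nilpotent Jordan block ($Ne_1=0$, $Ne_i=e_{i-1}$), and $\mathrm{Pet}_n=\{V_\bullet: NV_i\subseteq V_{i+1},\ 1\le i\le n-1\}$. For $J\subseteq[n-1]$, $w_J$ is the longest element of the subgroup of $\mathfrak S_n$ generated by $\{s_i:i\in J\}$. (It is known that the permutation flags lying in $\mathrm{Pet}_n$ are exactly the $w_J$.) *)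

(* Defs.v *)
From mathcomp Require Import all_boot all_order all_algebra all_fingroup.
From mathcomp Require Import reals complex.
Set Implicit Arguments. Unset Strict Implicit. Unset Printing Implicit Defensive.
Import GRing.Theory Num.Theory.
Local Open Scope ring_scope.

Section Flags.
Variables (F : fieldType) (n : nat).

(* Vectors of F^n are column vectors; a subspace of F^n is encoded, in the
   mathcomp row-space convention, by a square matrix whose ROW space is the
   set of transposes v^T of the vectors v of the subspace. *)

(* V_i(g) = span of the first i columns g e_1, ..., g e_i of g. The flag
   associated to the coset gB is (V_i(g))_i. *)
Definition flagsp (g : 'M[F]_n) (i : nat) : 'M[F]_n :=
  \matrix_(k < n) if (k < i)%N then (col k g)^T else 0.

Definition jordanN : 'M[F]_n := \matrix_(i < n, j < n) (j == i.+1 :> nat)%:R.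

(* Peterson variety condition: N V_i <= V_(i+1) for 1 <= i <= n-1.
   (N v)^T = v^T N^T, so the image N V_i has row-space encoding V_i *m N^T. *)
Definition inPet (V : nat -> 'M[F]_n) : Prop :=
  forall i : nat, (1 <= i)%N -> (i <= n.-1)%N ->
    (V i *m jordanN^T <= V i.+1)%MS.

Definition pmat (w : 'S_n) : 'M[F]_n := \matrix_(i < n, j < n) (i == w j)%:R.

Definition upper_borel (b : 'M[F]_n) : Prop :=
  b \in unitmx /\ forall i j : 'I_n, (j < i)%N -> b i j = 0.
Definition lower_borel (b : 'M[F]_n) : Prop :=
  b \in unitmx /\ forall i j : 'I_n, (i < j)%N -> b i j = 0.

(* X°_w ∩ Pet ≠ ∅ : X°_w = B w B / B = { b w B : b ∈ B } *)
Definition schubert_meets_Pet (w : 'S_n) : Prop :=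
  exists b, upper_borel b /\ inPet (flagsp (b *m pmat w)).
(* Ω°_w ∩ Pet ≠ ∅ : Ω°_w = B^- w B / B = { b w B : b ∈ B^- } *)
Definition dual_schubert_meets_Pet (w : 'S_n) : Prop :=
  exists b, lower_borel b /\ inPet (flagsp (b *m pmat w)).

End Flags.

Section Weyl.
Variable n : nat.

(* simple transposition s_(k+1) (paper's 1-indexed s_i, i = k+1),
   swapping the 0-indexed positions k and k+1 *)
Definition sref (k : nat) : 'S_n :=
  match n return 'S_n with
  | 0 => 1%g
  | m.+1 => if (k.+1 < m.+1)%N then tperm (inord k : 'I_m.+1) (inord k.+1) else 1%g
  end.

(* J ⊆ [n-1] is encoded as a set of 0-indexed k < n-1 (k <-> s_(k+1)) *)
Definition parabolic (J : {set 'I_n.-1}) : {set 'S_n} :=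
  <<[set sref (val k) | k in J]>>%g.

Definition perm_length (w : 'S_n) : nat :=
  #|[set p : 'I_n * 'I_n | (p.1 < p.2)%N && (w p.2 < w p.1)%N]|.

Definition is_longest_of (J : {set 'I_n.-1}) (w : 'S_n) : Prop :=
  w \in parabolic J /\ forall u, u \in parabolic J -> (perm_length u <= perm_length w)%N.

End Weyl.

(* Main.v *)
Require Import Defs.
From mathcomp Require Import all_boot all_order all_algebra all_fingroup.
From mathcomp Require Import reals complex.
From mathcomp Require Import zify.
Set Implicit Arguments. Unset Strict Implicit. Unset Printing Implicit Defensive.
Import GRing.Theory Num.Theory.
Local Close Scope ring_scope.

Fixpoint bid (J : nat -> bool) (y : nat) : nat :=
  if y is y'.+1 then bid J y' + ~~ J y' else 0.

Lemma bid_mono (J : nat -> bool) x y : x <= y -> bid J x <= bid J y.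
Proof.
elim: y => [|y IH]; first by rewrite leqn0 => /eqP ->.
rewrite leq_eqVlt => /orP [/eqP -> //|]; rewrite ltnS => /IH /= h.
exact: leq_trans h (leq_addr _ _).
Qed.

Lemma bid_eq (J : nat -> bool) x y : x <= y -> (forall k, x <= k -> k < y -> J k) -> bid J x = bid J y.
Proof.
elim: y => [|y IH]; first by rewrite leqn0 => /eqP ->.
rewrite leq_eqVlt => /orP [/eqP -> //|]; rewrite ltnS => hxy h /=.
rewrite (h y hxy (ltnSn _)) addn0; apply: IH => // k h1 h2; apply: h => //.
exact: ltnW.
Qed.

Lemma bid_lt (J : nat -> bool) x k y : x <= k -> k < y -> ~~ J k -> bid J x < bid J y.
Proof.
move=> h1 h2 h3; apply: (@leq_trans (bid J k.+1)).
  by rewrite /= h3 addn1 ltnS bid_mono.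
exact: bid_mono.
Qed.

Lemma bid_J (J : nat -> bool) x y k : bid J x = bid J y -> x <= k -> k < y -> J k.
Proof.
move=> h h1 h2; apply/negPn/negP => h3.
by have := bid_lt h1 h2 h3; rewrite h ltnn.
Qed.

Lemma bid_ltW (J : nat -> bool) x y : bid J x < bid J y -> x < y.
Proof. by move=> h; rewrite ltnNge; apply/negP => /(bid_mono J); rewrite leqNgt h. Qed.

Lemma bid_ext (J1 J2 : nat -> bool) y : (forall k, J1 k = J2 k) -> bid J1 y = bid J2 y.
Proof. by move=> h; elim: y => //= y ->; rewrite h. Qed.

Lemma bid_cut (J : nat -> bool) x y : (forall k, ~~ J k -> (k < x) = (k < y)) -> bid J x = bid J y.
Proof.
move=> h.
have H : forall a b, a <= b -> (forall k, ~~ J k -> (k < a) = (k < b)) -> bid J a = bid J b.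
  move=> a b hab hk; apply: bid_eq => // k h1 h2; apply/negPn/negP => /hk.
  by rewrite h2 ltnNge h1.
case: (leqP x y) => hxy; first exact: H.
by symmetry; apply: H; [exact: ltnW| move=> k /h ->].
Qed.

Lemma dec_chain (f : nat -> nat) p q : p < q ->
  (forall j, p <= j -> j < q -> f j.+1 < f j) -> f q < f p.
Proof.
elim: q => // q IH; rewrite ltnS leq_eqVlt => /orP [/eqP <- h|hpq h].
  exact: h.
apply: (leq_trans (h q (ltnW hpq) (ltnSn _))); apply: ltnW; apply: IH => // j h1 h2.
apply: h => //; exact: ltnW.
Qed.

Lemma inc_chain (f : nat -> nat) p q : p < q ->
  (forall j, p <= j -> j < q -> f j < f j.+1) -> f p < f q.
Proof.
elim: q => // q IH; rewrite ltnS leq_eqVlt => /orP [/eqP <- h|hpq h].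
  exact: h.
apply: (leq_trans _ (h q (ltnW hpq) (ltnSn _))); apply: ltnW; apply: IH => // j h1 h2.
apply: h => //; exact: ltnW.
Qed.

Section Comb.
Variable m : nat.
Local Notation n := m.+1.

Definition Jn (J : {set 'I_m}) (k : nat) : bool := [exists j in J, (j : nat) == k].

Lemma Jn_lt J k : Jn J k -> k < m.
Proof. rewrite /Jn => /existsP [j /andP [_ /eqP <-]]. exact: ltn_ord. Qed.

Lemma sref_val k (x : 'I_n) : k.+1 < n ->
  nat_of_ord (@sref n k x) = if (x : nat) == k then k.+1 else if (x : nat) == k.+1 then k else x.
Proof.
move=> hk; rewrite /sref hk.
have e1 : nat_of_ord (inord k : 'I_n) = k by rewrite inordK // ltnW.
have e2 : nat_of_ord (inord k.+1 : 'I_n) = k.+1 by rewrite inordK.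
case: (eqVneq x (inord k)) => [->|h1]; first by rewrite tpermL e1 e2 eqxx.
case: (eqVneq x (inord k.+1)) => [->|h2].
  by rewrite tpermR e1 e2 eqxx; case: eqP => // /eqP; lia.

have -> : ((x : nat) == k) = false by apply/negP => /eqP h; case/eqP: h1; apply: ord_inj; rewrite e1.
have -> : ((x : nat) == k.+1) = false by apply/negP => /eqP h; case/eqP: h2; apply: ord_inj; rewrite e2.
by rewrite tpermD 1?eq_sym // => _.
Qed.

Definition bpset (J : nat -> bool) : {set 'S_n} :=
  [set u : 'S_n | [forall x : 'I_n, bid J (u x) == bid J x]].

Lemma bpsetP J (u : 'S_n) : reflect (forall x : 'I_n, bid J (u x) = bid J x) (u \in bpset J).
Proof.
rewrite inE; apply: (iffP forallP) => h x; first exact/eqP.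
by apply/eqP.
Qed.

Lemma group_set_bp J : group_set (bpset J).
Proof.
apply/group_setP; split; first by apply/bpsetP => x; rewrite perm1.
move=> u v /bpsetP hu /bpsetP hv; apply/bpsetP => x; by rewrite permM hv hu.
Qed.

Canonical bp_group J := Group (group_set_bp J).

Lemma sref_bp J k : Jn J k -> @sref n k \in bpset (Jn J).
Proof.
move=> hJ; have hk : k.+1 < n by have := Jn_lt hJ.
apply/bpsetP => x; rewrite sref_val //.
case: eqP => [->|_]; first by rewrite /= hJ addn0.
by case: eqP => [->|_] //=; rewrite hJ addn0.
Qed.

Lemma par_bp (J : {set 'I_m}) : @parabolic n J \subset bpset (Jn J).
Proof.
rewrite /parabolic (gen_subG _ (bp_group (Jn J))); apply/subsetP => u /imsetP [j hj ->].
apply: sref_bp; apply/existsP; exists j; by rewrite hj eqxx.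
Qed.

Lemma sref_par (J : {set 'I_m}) (j : 'I_m) : j \in J -> @sref n (val j) \in @parabolic n J.
Proof. by move=> hj; apply: mem_gen; apply: imset_f. Qed.

Lemma srefK k (x : 'I_n) : k.+1 < n -> @sref n k (@sref n k x) = x.
Proof. by move=> hk; rewrite /sref hk tpermK. Qed.

Lemma srefM k : k.+1 < n -> (@sref n k * @sref n k = 1)%g.
Proof. by move=> hk; rewrite /sref hk tperm2. Qed.

Lemma inordK' k : k < n -> nat_of_ord (inord k : 'I_n) = k.
Proof. exact: inordK. Qed.

Definition invs (u : 'S_n) : {set 'I_n * 'I_n} :=
  [set p : 'I_n * 'I_n | (p.1 < p.2) && (u p.2 < u p.1)].

Lemma lenE u : perm_length u = #|invs u|.
Proof. by []. Qed.

Lemma len_up (u : 'S_n) k : k.+1 < n -> u (inord k) < u (inord k.+1) ->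
  perm_length u < perm_length (@sref n k * u)%g.
Proof.
move=> hk hu; set s := @sref n k.
pose phi (p : 'I_n * 'I_n) := (s p.1, s p.2).
have phi_inj : injective phi.
  move=> [a b] [c d] /= [] /perm_inj -> /perm_inj -> //.
have e1 : nat_of_ord (inord k : 'I_n) = k by rewrite inordK // ltnW.
have e2 : nat_of_ord (inord k.+1 : 'I_n) = k.+1 by rewrite inordK.
pose kk := (inord k : 'I_n, inord k.+1 : 'I_n).
have sub : kk |: (phi @: invs u) \subset invs (s * u)%g.
  apply/subsetP => p; rewrite in_setU1 => /orP [/eqP ->|].
    rewrite inE /= e1 e2 ltnSn /= !permM.
    have -> : s (inord k) = inord k.+1 by apply: ord_inj; rewrite sref_val // e1 eqxx e2.
    have -> : s (inord k.+1) = inord k by apply: ord_inj; rewrite sref_val // e2 e1 eqxx; case: eqP => //; lia.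
    by [].
  case/imsetP => [[a b]]; rewrite inE /= => /andP [hab hba] ->.
  rewrite inE /= !permM !srefK // hba andbT.
  have hne : ~ ((a : nat) = k /\ (b : nat) = k.+1).
    case=> ha hb.
    have ea : a = inord k by apply: ord_inj; rewrite e1.
    have eb : b = inord k.+1 by apply: ord_inj; rewrite e2.
    by move: hba; rewrite ea eb ltnNge ltnW.
  rewrite !sref_val //.
  move: hab hne; repeat (case: ifP => [/eqP ?|/negbT/eqP ?]); lia.
have nin : kk \notin phi @: invs u.
  apply/imsetP => [[[a b]]]; rewrite inE /= => /andP [hab _] [].
  move=> /(congr1 (@sref n k)); rewrite srefK // => ha.
  move=> /(congr1 (@sref n k)); rewrite srefK // => hb.
  move: hab; rewrite -ha -hb !sref_val // e1 e2 eqxx.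
  by rewrite eqxx (_ : (k.+1 == k) = false) ?ltnn //; apply/eqP; lia.
rewrite !lenE; have := subset_leq_card sub.
by rewrite cardsU1 nin card_imset.
Qed.

Lemma bp_trivial (J : nat -> bool) (u : 'S_n) : u \in bpset J ->
  (forall k, J k -> u (inord k) < u (inord k.+1)) -> u = 1%g.
Proof.
move=> /bpsetP hb hinc; apply/permP => x; rewrite perm1.
suff H : forall N (x : 'I_n), x < N -> u x = x by exact: (H x.+1 x (ltnSn x)).
elim=> // N IH y; rewrite ltnS leq_eqVlt => /orP [/eqP hy|]; last exact: IH.
have fix1 : forall z : 'I_n, z < y -> u z = z by move=> z; rewrite hy; exact: IH.
have ge1 : y <= u y.
  rewrite leqNgt; apply/negP => h.
  have := fix1 _ h => /perm_inj h'; by move: h; rewrite h' ltnn.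
set z := (u^-1)%g y.
have uz : u z = y by rewrite /z permKV.
have ge2 : y <= z.
  rewrite leqNgt; apply/negP => h; have := fix1 _ h; rewrite uz => h'.
  by move: h; rewrite h' ltnn.
move: ge2; rewrite leq_eqVlt => /orP [/eqP /ord_inj hyz|hlt]; first by rewrite {1}hyz uz.
exfalso.
have hbid : bid J y = bid J z by rewrite -{1}uz hb.
have := @inc_chain (fun j => u (inord j)) y z hlt.
rewrite /= !inord_val uz => H.
have := H (fun j h1 h2 => hinc j (bid_J hbid h1 h2)).
by rewrite ltnNge ge1.
Qed.

Lemma sref_k k : k.+1 < n -> @sref n k (inord k) = inord k.+1.
Proof.
move=> hk; apply: ord_inj; rewrite sref_val // !inordK ?eqxx //; exact: ltnW.
Qed.

Lemma sref_k1 k : k.+1 < n -> @sref n k (inord k.+1) = inord k.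
Proof.
move=> hk; apply: ord_inj; rewrite sref_val // !inordK ?eqxx //; last exact: ltnW.
by case: eqP => //; lia.
Qed.

Lemma Jn_ex (J : {set 'I_m}) k : Jn J k -> exists2 j : 'I_m, j \in J & (j : nat) = k.
Proof. by rewrite /Jn => /existsP [j /andP [hj /eqP e]]; exists j. Qed.

Lemma sref_parJ (J : {set 'I_m}) k : Jn J k -> @sref n k \in @parabolic n J.
Proof. by case/Jn_ex => j hj <-; apply: sref_par. Qed.

Lemma bp_par (J : {set 'I_m}) (u : 'S_n) : u \in bpset (Jn J) -> u \in @parabolic n J.
Proof.
suff H : forall N (u : 'S_n), perm_length u < N -> u \in bpset (Jn J) -> u \in @parabolic n J.
  exact: (H (perm_length u).+1 u (ltnSn _)).
elim=> // N IH {}u hlen hu.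
case: (boolP [exists k : 'I_m, (k \in J) && ~~ (u (inord k) < u (inord k.+1))]).
  case/existsP => k /andP [hkJ hn].
  have hkn : k.+1 < n by rewrite ltnS ltn_ord.
  have hJ : Jn J k by apply/existsP; exists k; rewrite hkJ eqxx.
  have hlt : u (inord k.+1) < u (inord k).
    move: hn; rewrite -leqNgt leq_eqVlt => /orP [/eqP e|//].
    have := perm_inj (ord_inj e) => /(congr1 (@nat_of_ord n)).
    by rewrite (inordK hkn) (inordK (ltnW hkn)); lia.
  set u' := (@sref n k * u)%g.
  have hu' : u' \in bpset (Jn J) by rewrite groupM // sref_bp.
  have hlen' : perm_length u' < perm_length (@sref n k * u')%g.
    by apply: len_up => //; rewrite !permM sref_k // sref_k1.
  have eu : (@sref n k * u')%g = u by rewrite /u' mulgA srefM // mul1g.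
  rewrite -eu groupM ?sref_parJ //; apply: IH => //.
  by rewrite eu in hlen'; apply: leq_trans hlen' _; rewrite -ltnS.
rewrite negb_exists => /forallP hall.
have -> : u = 1%g.
  apply: (bp_trivial hu) => k /Jn_ex [j hj <-].
  by have := hall j; rewrite hj /= negbK.
exact: group1.
Qed.

Lemma par_inv (J : nat -> bool) (u : 'S_n) (p q : 'I_n) : u \in bpset J -> p < q -> u q < u p ->
  bid J p = bid J q.
Proof.
move=> /bpsetP hb hpq hu; apply/eqP; rewrite eqn_leq bid_mono /=; last exact: ltnW.
rewrite leqNgt; apply/negP => h.
have : bid J (u p) < bid J (u q) by rewrite !hb.
by move/bid_ltW; rewrite ltnNge ltnW.
Qed.

Definition P1 (w : 'S_n) := forall k : 'I_n, k.+1 < n -> 0 < w k ->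
  exists x : 'I_n, x <= k.+1 /\ (w x).+1 = w k.

Lemma longest_P1 (J : {set 'I_m}) (w : 'S_n) : @is_longest_of n J w -> P1 w.
Proof.
case=> hw hmax; have /bpsetP hb := subsetP (par_bp J) _ hw.
have B1 : forall k, Jn J k -> w (inord k.+1) < w (inord k).
  move=> k hJ; have hk : k.+1 < n by rewrite ltnS; exact: Jn_lt hJ.
  rewrite ltnNge leq_eqVlt; apply/negP => /orP [/eqP e | hlt].
    have := perm_inj (ord_inj e) => /(congr1 (@nat_of_ord n)).
    by rewrite (inordK hk) (inordK (ltnW hk)); lia.
  have := len_up hk hlt; rewrite ltnNge => /negP; apply.
  by apply: hmax; rewrite groupM ?sref_parJ.
move=> k hk hpos; set v := nat_of_ord (w k).
have hv : v.-1 < n by apply: leq_ltn_trans (leq_pred _) (ltn_ord _).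
set a : 'I_n := inord v.-1; set x := (w^-1)%g a.
have wx : w x = a by rewrite /x permKV.
have va : nat_of_ord a = v.-1 by rewrite inordK.
exists x; split; last by rewrite wx va prednK.
have bx : bid (Jn J) x = bid (Jn J) v.-1 by rewrite -hb wx va.
have bk : bid (Jn J) k = bid (Jn J) v.-1 + ~~ Jn J v.-1.
  by have hv0 : 0 < v by []; rewrite -hb -/v -{1}(prednK hv0).
have wk : forall j : 'I_n, w (inord j) = w j by move=> j; rewrite inord_val.
case hJ: (Jn J v.-1); last first.
  have : bid (Jn J) x < bid (Jn J) k by rewrite bx bk hJ addn1.
  by move/bid_ltW/ltnW/leq_trans; apply.
rewrite hJ addn0 -bx in bk.
have hv0 : 0 < v by [].
case: (ltngtP x k) => hxk.
- by rewrite ltnW // ltnW.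
- rewrite leqNgt; apply/negP => hx1.
  have := @dec_chain (fun j => w (inord j)) k.+1 x hx1.
  rewrite /= !wk wx va => H.
  have h2 := H (fun j h1 h2 => B1 j (bid_J bk (ltnW h1) h2)).
  have h1 := B1 k (bid_J bk (leqnn _) (ltnW hx1)); rewrite wk -/v in h1.
  lia.
- by rewrite hxk.
Qed.

Lemma card_lt (j : nat) : j <= n -> #|[set z : 'I_n | z < j]| = j.
Proof.
elim: j => [_|j IH hj].
  by rewrite (_ : [set z : 'I_n | z < 0] = set0) ?cards0 //; apply/setP => z; rewrite !inE.
have hjn : j < n by [].
rewrite (_ : [set z : 'I_n | z < j.+1] = inord j |: [set z : 'I_n | z < j]).
  by rewrite cardsU1 inE inordK // ltnn IH // ltnW.
apply/setP => z; rewrite !inE ltnS leq_eqVlt; congr (_ || _).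
apply/eqP/eqP => [e|->]; last by rewrite inordK.
by apply: ord_inj; rewrite inordK.
Qed.

Section DirA.
Variable w : 'S_n.
Hypothesis hP : P1 w.

Let gw (c : nat) : nat := (w^-1)%g (inord c).

Definition desc (k : nat) := (k.+1 < n) && (w (inord k.+1) < w (inord k)).

Lemma Pv c : c.+1 < n -> gw c <= (gw c.+1).+1.
Proof.
move=> hc; set kk := (w^-1)%g (inord c.+1 : 'I_n).
have wkk : nat_of_ord (w kk) = c.+1 by rewrite /kk permKV inordK.
have hkk : gw c.+1 = kk by [].
rewrite hkk; case: (ltnP kk.+1 n) => hkn; last first.
  by apply: ltnW; apply: leq_trans (ltn_ord _) hkn.
have hpos : 0 < w kk by rewrite wkk.
have [x [hx e]] := hP hkn hpos.
rewrite wkk in e; case: e => e.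
suff -> : gw c = x by [].
rewrite /gw (_ : inord c = w x) ?permK //.
by apply: ord_inj; rewrite inordK ?e // ltnW.
Qed.

Lemma gwK (y : 'I_n) : gw (w y) = y.
Proof. by rewrite /gw inord_val permK. Qed.

Lemma wgw c : c < n -> nat_of_ord (w (inord (gw c))) = c.
Proof. by move=> hc; rewrite /gw inord_val permKV inordK. Qed.

Lemma keyF k (y : 'I_n) : ~~ desc k -> y <= k -> w y <= k.
Proof.
move=> hnd hyk; rewrite leqNgt; apply/negP => hv.
set v := nat_of_ord (w y).
have hvn : v < n by apply: ltn_ord.
have hkn : k.+1 < n by apply: leq_ltn_trans hv hvn.
have gv : gw v = y by rewrite /v gwK.
have [c [hcv hc]] : exists c, c <= v /\ k < gw c.
  case: (boolP [exists c : 'I_n, (c <= v) && (k < gw c)]).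
    by case/existsP => c /andP [h1 h2]; exists c.
  rewrite negb_exists => /forallP hall; exfalso.
  have sub : [set (w^-1)%g c | c in [set c : 'I_n | c < v.+1]] \subset [set z : 'I_n | z < k.+1].
    apply/subsetP => z /imsetP [c]; rewrite !inE => hc ->.
    rewrite ltnS in hc; have := hall c; rewrite hc /= -leqNgt /gw inord_val; by [].
  have := subset_leq_card sub; rewrite card_imset; last exact: perm_inj.
  rewrite !card_lt //; last exact: ltnW.
  by rewrite ltnS leqNgt hv.
have [c' [hc'v [hc'1 hc'2]]] : exists c', c' < v /\ k < gw c' /\ gw c'.+1 <= k.
  have H : forall d c, v - c <= d -> c <= v -> k < gw c ->
      exists c', c' < v /\ k < gw c' /\ gw c'.+1 <= k.
    elim=> [|d IH] c0 hd h0 h1.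
      have ec : c0 = v by apply/eqP; rewrite eqn_leq h0 -subn_eq0 -leqn0.
      by move: h1; rewrite ec gv ltnNge hyk.
    have hc0v : c0 < v.
      rewrite ltn_neqAle h0 andbT; apply/negP => /eqP ec.
      by move: h1; rewrite ec gv ltnNge hyk.
    case: (leqP (gw c0.+1) k) => h2; first by exists c0.
    apply: (IH c0.+1) => //; lia.
  exact: (H (v - c) c (leqnn _) hcv hc).
have := Pv (leq_ltn_trans hc'v hvn) => hP'.
have e1 : gw c' = k.+1 by lia.
have e2 : gw c'.+1 = k by lia.
move/negP: hnd; apply; rewrite /desc hkn /=.
have -> : (inord k.+1 : 'I_n) = inord (gw c') by rewrite e1.
have -> : (inord k : 'I_n) = inord (gw c'.+1) by rewrite e2.
rewrite !wgw //; last exact: ltn_trans hc'v hvn.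
by apply: leq_ltn_trans hc'v hvn.
Qed.

Lemma keyB k (y : 'I_n) : ~~ desc k -> (y <= k) = (w y <= k).
Proof.
move=> hnd; apply/idP/idP; first exact: keyF.
set B := [set z : 'I_n | z <= k].
have sub : w @: B \subset B.
  by apply/subsetP => z /imsetP [x]; rewrite !inE => hx ->; apply: keyF.
have eB : w @: B = B.
  by apply/eqP; rewrite eqEcard sub (card_imset _ (@perm_inj _ w)) leqnn.
move=> hy; have : w y \in w @: B by rewrite eB inE.
by rewrite mem_imset ?inE //; exact: perm_inj.
Qed.

Lemma P1_longest : exists J : {set 'I_m}, @is_longest_of n J w.
Proof.
pose J := [set j : 'I_m | desc j].
have hJn : forall k, Jn J k = desc k.
  move=> k; apply/idP/idP.
    by case/Jn_ex => j; rewrite inE => hj <-.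
  move=> hd; have hk : k < m by move: hd => /andP [h _]; rewrite -ltnS.
  by apply/existsP; exists (Ordinal hk); rewrite inE /= hd eqxx.
have hbp : w \in bpset (Jn J).
  apply/bpsetP => y; rewrite !(bid_ext _ hJn).
  by apply: bid_cut => k hk; rewrite !ltnNge (keyB y hk).
exists J; split; first exact: bp_par.
move=> u hu; rewrite !lenE; apply: subset_leq_card; apply/subsetP => [[p q]].
rewrite !inE /= => /andP [hpq huq].
have hb := par_inv (subsetP (par_bp J) _ hu) hpq huq.
have := @dec_chain (fun j => w (inord j)) p q hpq; rewrite /= !inord_val => H.
rewrite hpq /=; apply: H => j h1 h2.
by have := bid_J hb h1 h2; rewrite hJn => /andP [_ h].
Qed.

End DirA.

End Comb.

Local Open Scope ring_scope.

Section Mat.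
Variables (F : fieldType) (n : nat).

Definition Pcomb (w : 'S_n) : Prop :=
  forall i : nat, (1 <= i)%N -> (i <= n.-1)%N -> forall k : 'I_n, (k < i)%N -> (0 < w k)%N ->
    exists x : 'I_n, (x <= i)%N /\ (w x).+1 = w k.

Lemma flagspE (g : 'M[F]_n) i (k t : 'I_n) : flagsp g i k t = if (k < i)%N then g t k else 0.
Proof. by rewrite mxE; case: ifP => _; rewrite ?mxE. Qed.

Lemma pmatM (b : 'M[F]_n) (w : 'S_n) s k : (b *m pmat F w) s k = b s (w k).
Proof.
rewrite mxE (bigD1 (w k)) //= mxE eqxx mulr1 big1 ?addr0 // => j hj.
by rewrite mxE (negbTE hj) mulr0.
Qed.

Lemma jordanNE (t s : 'I_n) : jordanN F n t s = (s == t.+1 :> nat)%:R.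
Proof. by rewrite mxE. Qed.

Lemma sum1 (e : 'I_n -> F) v : (forall u, u != v -> e u = 0) -> \sum_u e u = e v.
Proof. by move=> h; rewrite (bigD1 v) //= big1 ?addr0 // => u /h. Qed.

Lemma diag_up (b : 'M[F]_n) : upper_borel b -> forall i, b i i != 0.
Proof.
case=> hu ht i.
have htr : is_trig_mx b^T by apply/is_trig_mxP => p q hpq; rewrite mxE ht.
move: hu; rewrite unitmxE -det_tr det_trig // unitfE => /prodf_neq0 /(_ i isT).
by rewrite mxE.
Qed.

Lemma diag_low (b : 'M[F]_n) : lower_borel b -> forall i, b i i != 0.
Proof.
case=> hu ht i.
have htr : is_trig_mx b by apply/is_trig_mxP => p q hpq; rewrite ht.
by move: hu; rewrite unitmxE det_trig // unitfE => /prodf_neq0 /(_ i isT).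
Qed.

Lemma tri_up (b : 'M[F]_n) (d : 'I_n -> F) (a a' : 'I_n) :
  (forall i j : 'I_n, (j < i)%N -> b i j = 0) -> (forall i, b i i != 0) -> a'.+1 = a ->
  (forall t, \sum_s b s a * jordanN F n t s = \sum_v d v * b t v) -> d a' != 0.
Proof.
move=> hup hd ha heq.
have fz : forall t : 'I_n, (a <= t)%N -> \sum_s b s a * jordanN F n t s = 0.
  move=> t ht; apply: big1 => s _; rewrite jordanNE.
  case: eqP => [e|_]; last by rewrite mulr0.
  by rewrite hup ?mul0r // e ltnS.
have Z : forall M (v : 'I_n), (n - v <= M)%N -> (a <= v)%N -> d v = 0.
  elim=> [|M IH] v hv hav.
    by move: (ltn_ord v); rewrite -subn_eq0 in hv; lia.
  have := heq v; rewrite fz // (@sum1 (fun u => d u * b v u) v) => [|u hu].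
    by move/esym/eqP; rewrite mulf_eq0 (negbTE (hd v)) orbF => /eqP.
  case: (ltngtP u v) => h.
  - by rewrite hup ?mulr0.
  - by rewrite (IH u) ?mul0r //; lia.
  - by move/eqP: hu; case; apply: ord_inj.
have := heq a'.
rewrite (@sum1 (fun u => d u * b a' u) a') => [|u hu]; last first.
  case: (ltngtP u a') => h.
  - by rewrite hup ?mulr0.
  - by rewrite (Z n) ?mul0r //; lia.
  - by move/eqP: hu; case; apply: ord_inj.
rewrite (@sum1 (fun s => b s a * jordanN F n a' s) a) => [|s hs]; last first.
  rewrite jordanNE; case: eqP => [e|_]; last by rewrite mulr0.
  by move/eqP: hs; case; apply: ord_inj; rewrite e ha.
rewrite jordanNE ha eqxx mulr1 => e; apply/negP => /eqP h0.
by move: (hd a); rewrite e h0 mul0r eqxx.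
Qed.

Lemma tri_low (b : 'M[F]_n) (d : 'I_n -> F) (a a' : 'I_n) :
  (forall i j : 'I_n, (i < j)%N -> b i j = 0) -> (forall i, b i i != 0) -> a'.+1 = a ->
  (forall t, \sum_s b s a * jordanN F n t s = \sum_v d v * b t v) -> d a' != 0.
Proof.
move=> hlo hd ha heq.
have fz : forall t : 'I_n, (t < a')%N -> \sum_s b s a * jordanN F n t s = 0.
  move=> t ht; apply: big1 => s _; rewrite jordanNE.
  case: eqP => [e|_]; last by rewrite mulr0.
  by rewrite hlo ?mul0r // e -ha ltnS.
have step : forall v : 'I_n, (v < a')%N -> (forall u : 'I_n, (u < v)%N -> d u = 0) -> d v = 0.
  move=> v hav IH.
  have := heq v; rewrite fz // (@sum1 (fun u => d u * b v u) v) => [|u hu].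
    by move/esym/eqP; rewrite mulf_eq0 (negbTE (hd v)) orbF => /eqP.
  case: (ltngtP u v) => h.
  - by rewrite (IH u) ?mul0r.
  - by rewrite hlo ?mulr0.
  - by move/eqP: hu; case; apply: ord_inj.
have Z : forall M (v : 'I_n), (v < M)%N -> (v < a')%N -> d v = 0.
  elim=> // M IH v hv hav; apply: step => // u hu; apply: IH; lia.
have := heq a'.
rewrite (@sum1 (fun u => d u * b a' u) a') => [|u hu]; last first.
  case: (ltngtP u a') => h.
  - by rewrite (Z n) ?mul0r.
  - by rewrite hlo ?mulr0.
  - by move/eqP: hu; case; apply: ord_inj.
rewrite (@sum1 (fun s => b s a * jordanN F n a' s) a) => [|s hs]; last first.
  rewrite jordanNE; case: eqP => [e|_]; last by rewrite mulr0.
  by move/eqP: hs; case; apply: ord_inj; rewrite e ha.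
rewrite jordanNE ha eqxx mulr1 => e; apply/negP => /eqP h0.
by move: (hd a); rewrite e h0 mul0r eqxx.
Qed.

Lemma Pet_Pcomb (b : 'M[F]_n) (w : 'S_n) : upper_borel b \/ lower_borel b ->
  inPet (flagsp (b *m pmat F w)) -> Pcomb w.
Proof.
move=> hb hP i hi1 hi2 k hki hpos.
set g := b *m pmat F w.
have hr : (row k (flagsp g i *m (jordanN F n)^T) <= flagsp g i.+1)%MS.
  exact: submx_trans (row_sub k _) (hP i hi1 hi2).
case/submxP: hr => D hD.
have ha' : ((w k).-1 < n)%N by apply: leq_ltn_trans (leq_pred _) (ltn_ord _).
set a' : 'I_n := Ordinal ha'.
have ea : a'.+1 = w k by rewrite /= prednK.
pose d v := if ((w^-1)%g v < i.+1)%N then D 0 ((w^-1)%g v) else 0.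
have heq : forall t, \sum_s b s (w k) * jordanN F n t s = \sum_v d v * b t v.
  move=> t; have := congr1 (fun M : 'M[F]_(1,n) => M 0 t) hD; rewrite !mxE => e.
  rewrite [RHS](reindex_inj (@perm_inj _ w)) /=.
  have -> : \sum_s b s (w k) * jordanN F n t s = \sum_s flagsp g i k s * (jordanN F n)^T s t.
    by apply: eq_bigr => s _; rewrite flagspE hki pmatM [(jordanN F n)^T s t]mxE.
  rewrite e; apply: eq_bigr => l _; rewrite flagspE /d permK.
  by case: ifP => _; rewrite ?pmatM ?mul0r ?mulr0.
have hd : d a' != 0.
  case: hb => hb.
    exact: (tri_up (proj2 hb) (diag_up hb) ea heq).
  exact: (tri_low (proj2 hb) (diag_low hb) ea heq).
move: hd; rewrite /d; case: ifP => hx; last by rewrite eqxx.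
move=> _; exists ((w^-1)%g a'); split; first by [].
by rewrite permKV.
Qed.

Lemma Pcomb_Pet (w : 'S_n) : Pcomb w -> inPet (flagsp (pmat F w)).
Proof.
move=> hP i hi1 hi2; apply/row_subP => k; rewrite row_mul.
have E : forall t : 'I_n, (row k (flagsp (pmat F w) i) *m (jordanN F n)^T) 0 t =
    if (k < i)%N then ((w k : nat) == t.+1)%:R else 0.
  move=> t; rewrite !mxE.
  under eq_bigr => s _ do rewrite mxE flagspE [(jordanN F n)^T s t]mxE jordanNE mxE.
  case: ifP => hki; last by rewrite big1 // => s _; rewrite mul0r.
  rewrite (sum1 (v := w k)) => [|s hs]; first by rewrite eqxx mul1r.
  by rewrite (negbTE hs) mul0r.
case: (ltnP k i) => hki; last first.
  have -> : row k (flagsp (pmat F w) i) *m (jordanN F n)^T = 0.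
    by apply/rowP => t; rewrite E mxE ltnNge hki.
  exact: sub0mx.
case: (posnP (w k)) => hpos.
  have -> : row k (flagsp (pmat F w) i) *m (jordanN F n)^T = 0.
    by apply/rowP => t; rewrite E mxE hki hpos.
  exact: sub0mx.
have [x [hx ex]] := hP i hi1 hi2 k hki hpos.
have -> : row k (flagsp (pmat F w) i) *m (jordanN F n)^T = row x (flagsp (pmat F w) i.+1).
  apply/rowP => t; rewrite E hki !mxE ltnS hx !mxE -ex eqSS.
  by rewrite eq_sym.
exact: row_sub.
Qed.

End Mat.

Local Open Scope ring_scope.

Lemma upper1 (F : fieldType) n : upper_borel (1 : 'M[F]_n).
Proof.
split; first exact: unitmx1.
by move=> i j h; rewrite mxE; case: eqP => // e; move: h; rewrite e ltnn.
Qed.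

Lemma lower1 (F : fieldType) n : lower_borel (1 : 'M[F]_n).
Proof.
split; first exact: unitmx1.
by move=> i j h; rewrite mxE; case: eqP => // e; move: h; rewrite e ltnn.
Qed.

Lemma Pcomb_longest n (w : 'S_n) :
  Pcomb w <-> exists J : {set 'I_n.-1}, is_longest_of J w.
Proof.
case: n w => [|m] w.
  have all1 : forall u : 'S_0, u = 1%g by move=> u; apply/permP => [[]].
  split => _.
    exists set0; split; first by rewrite (all1 w) group1.
    by move=> u _; rewrite (all1 u) (all1 w).
  by move=> i hi1 hi2; move: hi1; rewrite leqNgt (leq_ltn_trans hi2).
split => h.
  apply: P1_longest => k hk hpos.
  have [x [hx e]] := h k.+1 (ltn0Sn _) hk k (ltnSn _) hpos.
  by exists x.
case: h => J /longest_P1 hP i hi1 hi2 k hki hpos.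
have hk : (k.+1 < m.+1)%N by apply: leq_ltn_trans hki _.
have [x [hx e]] := hP k hk hpos.
by exists x; split => //; apply: leq_trans hx hki.
Qed.

Theorem lemma3p5 (R : realType) (n : nat) (w : 'S_n) :
  [/\ (schubert_meets_Pet R[i] w <-> dual_schubert_meets_Pet R[i] w),
      (dual_schubert_meets_Pet R[i] w <-> inPet (flagsp (pmat R[i] w)))
    & (inPet (flagsp (pmat R[i] w)) <->
         exists J : {set 'I_n.-1}, is_longest_of J w)].
Proof.
have h1 : schubert_meets_Pet R[i] w <-> Pcomb w.
  split; first by case=> b [hb hP]; exact: (Pet_Pcomb (or_introl hb) hP).
  by move=> hc; exists 1; split; [exact: upper1 | rewrite mul1mx; exact: Pcomb_Pet].
have h2 : dual_schubert_meets_Pet R[i] w <-> Pcomb w.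
  split; first by case=> b [hb hP]; exact: (Pet_Pcomb (or_intror hb) hP).
  by move=> hc; exists 1; split; [exact: lower1 | rewrite mul1mx; exact: Pcomb_Pet].
have h3 : inPet (flagsp (pmat R[i] w)) <-> Pcomb w.
  split; last exact: Pcomb_Pet.
  move=> h; apply: (@Pet_Pcomb R[i] n 1 w); first by left; exact: upper1.
  by rewrite mul1mx.
have h4 := Pcomb_longest w.
split; tauto.
Qed.
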